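(* Let $\Pi=(P,\mathcal{L})$ be an $n$-dimensional projective space and $\Pi'=(P',\mathcal{L}')$ an $n$-dimensional linear space satisfying the exchange axiom, and let $f$ be a strong embedding of $\Pi$ to $\Pi'$. If for some $k\in\{0,\dots,n-1\}$ the mapping $G_{k}(f):\mathcal{G}_k(\Pi)\to\mathcal{G}_k(\Pi')$, $S\mapsto\overline{f(S)}$, is bijective, then $f$ is a collineation.
   Context: A linear space $\Pi=(P,\mathcal{L})$ is a set $P$ of points with a family $\mathcal{L}$ of proper subsets (lines) such that each line has at least two points and any two distinct points $p,q$ lie on exactly one line $pq$. Points are collinear if some line contains them. A subspace is a set $S\subset P$ with $pq\subset S$ for all distinct $p,q\in S$; $\overline{X}$ is the smallest subspace containing $X$. A set $X$ is independent if $\overline{X}$ is not spanned by a proper subset of $X$. A subspace is $m$-dimensional if $m+1$ is the smallest number of points spanning it. Exchange axiom: for every $X\subset P$ and $p_1,p_2\in P\setminus\overline{X}$, $p_2\in\overline{X\cup\{p_1\}}$ implies $p_1\in\overline{X\cup\{p_2\}}$. A projective space is a linear space in which every $2$-dimensional subspace is a projective plane (any two of its lines meet and each line has at least three points). $\mathcal{G}_k(\Pi)$ is the set of $k$-dimensional subspaces. A strong embedding is an injection $f:P\to P'$ sending collinear triples to collinear triples, non-collinear triples to non-collinear triples and independent sets to independent sets; then $\dim\overline{f(S)}=\dim S$ for every subspace $S$. A collineation is a bijection $f:P\to P'$ with $f(\mathcal{L})=\mathcal{L}'$. *)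

(* Defs.v *)
From Stdlib Require Import List.
Set Implicit Arguments.

Definition subset {P : Type} (A B : P -> Prop) : Prop := forall x, A x -> B x.
Definition set_eq {P : Type} (A B : P -> Prop) : Prop := forall x, A x <-> B x.

Definition linear_space {P : Type} (L : (P -> Prop) -> Prop) : Prop :=
  (forall l, L l -> exists x, ~ l x) /\
  (forall l, L l -> exists p q, p <> q /\ l p /\ l q) /\
  (forall p q : P, p <> q ->
     exists l, L l /\ l p /\ l q /\
       forall l', L l' -> l' p -> l' q -> set_eq l' l).

Definition collinear {P : Type} (L : (P -> Prop) -> Prop) (a b c : P) : Prop :=
  exists l, L l /\ l a /\ l b /\ l c.

Definition subspace {P : Type} (L : (P -> Prop) -> Prop) (S : P -> Prop) : Prop :=
  forall l p q, L l -> p <> q -> S p -> S q -> l p -> l q -> subset l S.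

Definition closure {P : Type} (L : (P -> Prop) -> Prop) (X : P -> Prop) : P -> Prop :=
  fun x => forall S, subspace L S -> subset X S -> S x.

Definition independent {P : Type} (L : (P -> Prop) -> Prop) (X : P -> Prop) : Prop :=
  forall Y, subset Y X -> set_eq (closure L Y) (closure L X) -> subset X Y.

Definition dimension {P : Type} (L : (P -> Prop) -> Prop) (S : P -> Prop) (m : nat)
  : Prop :=
  (exists s : list P, NoDup s /\ length s = Datatypes.S m /\
      set_eq (closure L (fun x => In x s)) S) /\
  (forall s : list P, set_eq (closure L (fun x => In x s)) S -> Datatypes.S m <= length s).

Definition whole (P : Type) : P -> Prop := fun _ => True.

Definition exchange_axiom {P : Type} (L : (P -> Prop) -> Prop) : Prop :=
  forall (X : P -> Prop) (p1 p2 : P),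
    ~ closure L X p1 -> ~ closure L X p2 ->
    closure L (fun x => X x \/ x = p1) p2 ->
    closure L (fun x => X x \/ x = p2) p1.

Definition projective_space {P : Type} (L : (P -> Prop) -> Prop) : Prop :=
  linear_space L /\
  forall S, subspace L S -> dimension L S 2 ->
    (forall l1 l2, L l1 -> L l2 -> subset l1 S -> subset l2 S ->
        exists p, l1 p /\ l2 p) /\
    (forall l, L l -> subset l S ->
        exists a b c, l a /\ l b /\ l c /\ a <> b /\ a <> c /\ b <> c).

Definition image {P P' : Type} (f : P -> P') (X : P -> Prop) : P' -> Prop :=
  fun y => exists x, X x /\ f x = y.

Definition strong_embedding {P P' : Type} (L : (P -> Prop) -> Prop)
  (L' : (P' -> Prop) -> Prop) (f : P -> P') : Prop :=
  (forall x y, f x = f y -> x = y) /\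
  (forall a b c, collinear L a b c -> collinear L' (f a) (f b) (f c)) /\
  (forall a b c, ~ collinear L a b c -> ~ collinear L' (f a) (f b) (f c)) /\
  (forall X, independent L X -> independent L' (image f X)).

Definition Gk_bijective {P P' : Type} (L : (P -> Prop) -> Prop)
  (L' : (P' -> Prop) -> Prop) (f : P -> P') (k : nat) : Prop :=
  (forall S1 S2, subspace L S1 -> dimension L S1 k ->
                 subspace L S2 -> dimension L S2 k ->
     set_eq (closure L' (image f S1)) (closure L' (image f S2)) -> set_eq S1 S2) /\
  (forall T, subspace L' T -> dimension L' T k ->
     exists S, subspace L S /\ dimension L S k /\
       set_eq (closure L' (image f S)) T).

Definition collineation {P P' : Type} (L : (P -> Prop) -> Prop)
  (L' : (P' -> Prop) -> Prop) (f : P -> P') : Prop :=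
  (forall x y, f x = f y -> x = y) /\ (forall y, exists x, f x = y) /\
  (forall l, L l -> exists l', L' l' /\ set_eq (image f l) l') /\
  (forall l', L' l' -> exists l, L l /\ set_eq (image f l) l').

(* Main.v *)
Require Import Defs.
From Stdlib Require Import List Arith Lia Classical FunctionalExtensionality PropExtensionality.
Import ListNotations.

Lemma seq_eq {P : Type} (A B : P -> Prop) : set_eq A B -> A = B.
Proof. intro H. extensionality x. apply propositional_extensionality. apply H. Qed.

Lemma cl_sub {P : Type} (L : (P -> Prop) -> Prop) X : subset X (closure L X).
Proof. intros x Hx S _ HS. apply HS, Hx. Qed.

Lemma cl_subspace {P : Type} (L : (P -> Prop) -> Prop) (X : P -> Prop) : subspace L (closure L X).
Proof.
  intros l p q Hl Hpq Hp Hq Hlp Hlq x Hx S HS HXS.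
  apply (HS l p q Hl Hpq (Hp S HS HXS) (Hq S HS HXS) Hlp Hlq x Hx).
Qed.

Lemma cl_min {P : Type} (L : (P -> Prop) -> Prop) (X S : P -> Prop) :
  subspace L S -> subset X S -> subset (closure L X) S.
Proof. intros HS HXS x Hx. apply Hx; auto. Qed.

Lemma cl_mono {P : Type} (L : (P -> Prop) -> Prop) (X Y : P -> Prop) :
  subset X Y -> subset (closure L X) (closure L Y).
Proof. intros H. apply cl_min. apply cl_subspace. intros x Hx. apply cl_sub, H, Hx. Qed.

Lemma cl_mono2 {P : Type} (L : (P -> Prop) -> Prop) (X Y : P -> Prop) :
  subset X (closure L Y) -> subset (closure L X) (closure L Y).
Proof. intros H. apply cl_min; [apply cl_subspace | exact H]. Qed.

Lemma cl_of_subspace {P : Type} (L : (P -> Prop) -> Prop) (S : P -> Prop) :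
  subspace L S -> closure L S = S.
Proof.
  intro HS. apply seq_eq. intro x. split.
  - apply cl_min; auto. intros y Hy; exact Hy.
  - apply cl_sub.
Qed.

Lemma cl_eq_of {P : Type} (L : (P -> Prop) -> Prop) (A B : P -> Prop) :
  subset A (closure L B) -> subset B (closure L A) -> closure L A = closure L B.
Proof.
  intros H1 H2. apply seq_eq. intro x. split; [apply cl_mono2; exact H1 | apply cl_mono2; exact H2].
Qed.

Definition lset {P : Type} (t : list P) : P -> Prop := fun y => In y t.

Definition free {P : Type} (L : (P -> Prop) -> Prop) (t : list P) : Prop :=
  NoDup t /\ forall x, In x t -> ~ closure L (fun y => In y t /\ y <> x) x.

Lemma in_remove_split {P : Type} (t1 t2 : list P) b v :
  In v (t1 ++ b :: t2) -> v <> b -> In v (t1 ++ t2).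
Proof. rewrite !in_app_iff. simpl. intros [A|[A|A]] H; auto. congruence. Qed.

Lemma free_cons {P : Type} (L : (P -> Prop) -> Prop) (t : list P) y :
  exchange_axiom L -> free L t -> ~ closure L (lset t) y -> free L (y :: t).
Proof.
  intros EX [ND Hf] Hy. split.
  - constructor; [ intro Hin; apply Hy, cl_sub, Hin | exact ND].
  - intros x [<- | Hx].
    + intro H. apply Hy. revert H. apply cl_mono. intros v [[<-|Hv] Hne]; [congruence | exact Hv].
    + intro H. destruct (classic (x = y)) as [->|Hxy]. { apply Hy, cl_sub, Hx. }
      set (X := fun v => In v t /\ v <> x).
      assert (HX : ~ closure L X x) by (apply Hf; exact Hx).
      assert (HY : ~ closure L X y).
      { intro H'. apply Hy. revert H'. apply cl_mono. intros v [Hv _]; exact Hv. }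
      assert (H2 : closure L (fun v => X v \/ v = y) x).
      { revert H. apply cl_mono. intros v [[<-|Hv] Hne]. right; reflexivity. left; split; auto. }
      pose proof (EX X y x HY HX H2) as H3. apply Hy. revert H3. apply cl_mono.
      intros v [[Hv _]| ->]; [exact Hv | exact Hx].
Qed.

Lemma steinitz {P : Type} (L : (P -> Prop) -> Prop) (EX : exchange_axiom L) :
  forall (s : list P) (Z : P -> Prop) (t : list P),
  NoDup t ->
  (forall x, In x t -> ~ closure L (fun y => Z y \/ (In y t /\ y <> x)) x) ->
  (forall x, In x t -> closure L (fun y => Z y \/ In y s) x) ->
  length t <= length s.
Proof.
  induction s as [|y s IH]; intros Z t ND Hf Hs.
  - destruct t as [|x t]; [simpl; lia|].
    exfalso. apply (Hf x (or_introl eq_refl)).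
    apply (cl_mono L (fun y => Z y \/ In y [])). intros v [Hv|[]]. left; exact Hv.
    apply Hs; left; reflexivity.
  - destruct (classic (forall x, In x t -> closure L (fun v => Z v \/ In v s) x)) as [Hall|Hn].
    + specialize (IH Z t ND Hf Hall). simpl; lia.
    + apply not_all_ex_not in Hn as [x Hx]. apply imply_to_and in Hx as [Hxt Hxn].
      set (X := fun v => Z v \/ In v s).
      assert (Hy : ~ closure L X y).
      { intro Hy. apply Hxn. apply (cl_mono2 L (fun v => Z v \/ In v (y::s))).
        - intros v [Hv|[<-|Hv]]. apply cl_sub; left; exact Hv. exact Hy. apply cl_sub; right; exact Hv.
        - apply Hs; exact Hxt. }
      assert (H2 : closure L (fun v => X v \/ v = y) x).
      { generalize (Hs x Hxt). apply cl_mono. intros v [Hv|[<-|Hv]].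
        left; left; exact Hv. right; reflexivity. left; right; exact Hv. }
      pose proof (EX X y x Hy Hxn H2) as H3.
      destruct (in_split x t Hxt) as [t1 [t2 Ht]].
      assert (ND' : NoDup (t1 ++ t2)) by (subst t; eapply NoDup_remove_1; eauto).
      assert (Hx12 : ~ In x (t1 ++ t2)) by (subst t; eapply NoDup_remove_2; eauto).
      assert (Hin : forall v, In v t <-> In v (t1 ++ t2) \/ v = x).
      { intro v. subst t. rewrite !in_app_iff. simpl. split.
        - intros [A|[A|A]]; auto.
        - intros [[A|A]|A]; auto. }
      specialize (IH (fun v => Z v \/ v = x) (t1 ++ t2) ND').
      assert (Hlen : length t = S (length (t1 ++ t2))) by (subst t; rewrite !length_app; simpl; lia).
      enough (length (t1++t2) <= length s) by (simpl; lia).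
      apply IH.
      * intros w Hw Hc. apply (Hf w). apply Hin; left; exact Hw.
        revert Hc. apply cl_mono. intros v [[Hv| ->]|[Hv Hne]].
        -- left; exact Hv.
        -- right; split. apply Hin; right; reflexivity. intro E; subst; contradiction.
        -- right; split; auto. apply Hin; left; exact Hv.
      * intros w Hw. apply (cl_mono2 L (fun v => Z v \/ In v (y::s))).
        -- intros v [Hv|[<-|Hv]].
           ++ apply cl_sub; left; left; exact Hv.
           ++ revert H3; apply cl_mono; intros v [[Hv|Hv]| ->];
                [left;left;exact Hv| right; exact Hv | left; right; reflexivity].
           ++ apply cl_sub; right; exact Hv.
        -- apply Hs. apply Hin; left; exact Hw.
Qed.

Lemma steinitz0 {P : Type} (L : (P -> Prop) -> Prop) (EX : exchange_axiom L) (t s : list P) :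
  free L t -> (forall x, In x t -> closure L (lset s) x) -> length t <= length s.
Proof.
  intros [ND Hf] Hs. apply (steinitz L EX s (fun _ => False) t ND).
  - intros x Hx Hc. apply (Hf x Hx). revert Hc. apply cl_mono. intros v [[]|Hv]; exact Hv.
  - intros x Hx. generalize (Hs x Hx). apply cl_mono. intros v Hv; right; exact Hv.
Qed.
Lemma dim_min_free {P : Type} (L : (P -> Prop) -> Prop) (S : P -> Prop) m (s : list P) :
  dimension L S m -> NoDup s -> length s = Datatypes.S m -> closure L (lset s) = S ->
  free L s.
Proof.
  intros [_ Hmin] ND Hl Hs. split; [exact ND|].
  intros x Hx Hc. destruct (in_split x s Hx) as [s1 [s2 E]].
  assert (Hsp : closure L (lset (s1 ++ s2)) = closure L (lset s)).
  { apply cl_eq_of.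
    - intros v Hv. apply cl_sub. unfold lset in *. subst s. rewrite in_app_iff in *. simpl. tauto.
    - intros v Hv. destruct (classic (v = x)) as [->|Hne].
      + revert Hc. apply cl_mono. intros w [Hw Hne]. subst s. eapply in_remove_split; eauto.
      + apply cl_sub. unfold lset. subst s. eapply in_remove_split; eauto. }
  assert (Datatypes.S m <= length (s1 ++ s2)).
  { apply Hmin. change (closure L (fun x => In x (s1++s2))) with (closure L (lset (s1++s2))).
    rewrite Hsp, Hs. intro; tauto. }
  subst s. rewrite length_app in *. simpl in Hl. lia.
Qed.

Lemma dim_basis {P : Type} (L : (P -> Prop) -> Prop) (S : P -> Prop) m :
  dimension L S m -> exists t, free L t /\ length t = Datatypes.S m /\ closure L (lset t) = S.
Proof.
  intros HD. pose proof HD as HD0. destruct HD0 as [[s [ND [Hl Hs]]] Hmin].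
  apply seq_eq in Hs. exists s. split; [|split]; auto.
  eapply dim_min_free; eauto.
Qed.

Lemma indep_of_dim {P : Type} (L : (P -> Prop) -> Prop) (S : P -> Prop) m (s : list P) :
  dimension L S m -> NoDup s -> length s = Datatypes.S m -> closure L (lset s) = S ->
  independent L (lset s).
Proof.
  intros [_ Hmin] ND Hl Hs Y HY Hcl x Hx.
  apply NNPP. intro HnY. destruct (in_split x s Hx) as [s1 [s2 E]].
  assert (Hsp : closure L (lset (s1 ++ s2)) = closure L (lset s)).
  { apply seq_eq. intro v. split.
    - apply cl_mono. intros w Hw. unfold lset in *. subst s. rewrite in_app_iff in *. simpl. tauto.
    - intro Hv. apply Hcl in Hv. revert Hv. apply cl_mono. intros w Hw.
      assert (w <> x) by (intro; subst; contradiction).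
      unfold lset. subst s. eapply in_remove_split; eauto. apply HY; exact Hw. }
  assert (Datatypes.S m <= length (s1 ++ s2)).
  { apply Hmin. change (closure L (fun x => In x (s1++s2))) with (closure L (lset (s1++s2))).
    rewrite Hsp, Hs. intro; tauto. }
  subst s. rewrite length_app in *. simpl in Hl. lia.
Qed.

Lemma free_dim {P : Type} (L : (P -> Prop) -> Prop) (EX : exchange_axiom L) (S : P -> Prop) m (t : list P) :
  free L t -> length t = Datatypes.S m -> closure L (lset t) = S -> dimension L S m.
Proof.
  intros Hf Hl Hs. split.
  - exists t. split; [apply Hf|]. split; [exact Hl|]. unfold lset in Hs; rewrite Hs. intro; tauto.
  - intros s Hs'. apply seq_eq in Hs'. rewrite <- Hl. apply (steinitz0 L EX); auto.
    intros x Hx. unfold lset; rewrite Hs'. rewrite <- Hs. apply cl_sub. exact Hx.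
Qed.

Lemma free_le {P : Type} (L : (P -> Prop) -> Prop) (EX : exchange_axiom L) (S : P -> Prop) m (t : list P) :
  dimension L S m -> free L t -> subset (lset t) S -> length t <= Datatypes.S m.
Proof.
  intros [[s [ND [Hl Hs]]] _] Hf Ht. rewrite <- Hl. apply (steinitz0 L EX); auto.
  intros x Hx. apply Hs, Ht, Hx.
Qed.

Lemma free_span {P : Type} (L : (P -> Prop) -> Prop) (EX : exchange_axiom L) (S : P -> Prop) m (t : list P) :
  dimension L S m -> subspace L S -> free L t -> subset (lset t) S -> length t = Datatypes.S m ->
  closure L (lset t) = S.
Proof.
  intros HD HS Hf Ht Hl. apply seq_eq. intro y. split.
  - apply cl_min; auto.
  - intro Hy. apply NNPP. intro Hn.
    assert (Hf' := free_cons L t y EX Hf Hn).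
    assert (length (y :: t) <= Datatypes.S m).
    { apply (free_le L EX S); auto. intros v [<-|Hv]; auto. }
    simpl in H. lia.
Qed.

Lemma basis_exists {P : Type} (L : (P -> Prop) -> Prop) (EX : exchange_axiom L) n (V : P -> Prop) :
  dimension L (@whole P) n -> subspace L V -> exists t, free L t /\ closure L (lset t) = V.
Proof.
  intros Hn HV.
  assert (aux : forall k t, free L t -> subset (lset t) V -> Datatypes.S n - length t = k ->
            exists t', free L t' /\ closure L (lset t') = V).
  { induction k as [|k IH]; intros t Hf Ht Hk.
    - exists t. split; auto.
      assert (Hle : length t <= Datatypes.S n) by (apply (free_le L EX (@whole P)); auto; intros x _; exact I).
      assert (Hw : closure L (lset t) = @whole P).
      { apply (free_span L EX _ n); auto. intros l p q _ _ _ _ _ _ x _; exact I.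
        intros x _; exact I. lia. }
      apply seq_eq. intro x. split. apply cl_min; auto. intros _. rewrite Hw. exact I.
    - destruct (classic (subset V (closure L (lset t)))) as [Hs|Hs].
      + exists t. split; auto. apply seq_eq. intro x. split. apply cl_min; auto. apply Hs.
      + apply not_all_ex_not in Hs as [y Hy]. apply imply_to_and in Hy as [HVy Hny].
        apply (IH (y :: t)). apply free_cons; auto.
        intros v [<-|Hv]; auto. simpl. lia. }
  apply (aux (Datatypes.S n - 0) []). split. constructor. intros x []. intros x []. reflexivity.
Qed.

Lemma dim_unique {P : Type} (L : (P -> Prop) -> Prop) (S : P -> Prop) m m' :
  dimension L S m -> dimension L S m' -> m = m'.
Proof.
  intros [[s [_ [Hl Hs]]] Hmin] [[s' [_ [Hl' Hs']]] Hmin'].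
  specialize (Hmin s' Hs'). specialize (Hmin' s Hs). lia.
Qed.

Lemma dim_le {P : Type} (L : (P -> Prop) -> Prop) (EX : exchange_axiom L) (S T : P -> Prop) a b :
  dimension L S a -> dimension L T b -> subset S T -> a <= b.
Proof.
  intros HS HT Hsub. destruct (dim_basis L S a HS) as [t [Hf [Hl Hs]]].
  assert (length t <= Datatypes.S b).
  { apply (free_le L EX T); auto. intros x Hx. apply Hsub. rewrite <- Hs. apply cl_sub, Hx. }
  lia.
Qed.

Lemma dim_eq_sub {P : Type} (L : (P -> Prop) -> Prop) (EX : exchange_axiom L) (S T : P -> Prop) m :
  dimension L S m -> dimension L T m -> subspace L T -> subset S T -> S = T.
Proof.
  intros HS HT HTs Hsub. destruct (dim_basis L S m HS) as [t [Hf [Hl Hs]]].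
  rewrite <- Hs. apply (free_span L EX T m); auto.
  intros x Hx. apply Hsub. rewrite <- Hs. apply cl_sub, Hx.
Qed.

Lemma cl_cons_basis {P : Type} (L : (P -> Prop) -> Prop) (V : P -> Prop) (t : list P) y :
  closure L (lset t) = V -> closure L (lset (y :: t)) = closure L (fun v => V v \/ v = y).
Proof.
  intros Ht. apply cl_eq_of.
  - intros v [<-|Hv]. apply cl_sub; right; reflexivity.
    apply cl_sub; left. rewrite <- Ht. apply cl_sub, Hv.
  - intros v [Hv| ->]. rewrite <- Ht in Hv. revert Hv. apply cl_mono. intros w Hw; right; exact Hw.
    apply cl_sub; left; reflexivity.
Qed.

Lemma dim_cons {P : Type} (L : (P -> Prop) -> Prop) (EX : exchange_axiom L) (V : P -> Prop) m y :
  dimension L V m -> ~ V y -> dimension L (closure L (fun v => V v \/ v = y)) (Datatypes.S m).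
Proof.
  intros HV Hy. destruct (dim_basis L V m HV) as [t [Hf [Hl Ht]]].
  apply (free_dim L EX _ _ (y :: t)).
  - apply free_cons; auto. rewrite Ht; exact Hy.
  - simpl; lia.
  - apply cl_cons_basis; auto.
Qed.

Lemma line_eq {P : Type} (L : (P -> Prop) -> Prop) (l1 l2 : P -> Prop) p q :
  linear_space L -> L l1 -> L l2 -> p <> q -> l1 p -> l1 q -> l2 p -> l2 q -> l1 = l2.
Proof.
  intros [_ [_ H]] H1 H2 Hpq H1p H1q H2p H2q.
  destruct (H p q Hpq) as [l [_ [_ [_ U]]]].
  apply seq_eq. intro x. rewrite (U l1 H1 H1p H1q x), (U l2 H2 H2p H2q x). tauto.
Qed.

Lemma line_exists {P : Type} (L : (P -> Prop) -> Prop) (p q : P) :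
  linear_space L -> p <> q -> exists l, L l /\ l p /\ l q.
Proof. intros [_ [_ H]] Hpq. destruct (H p q Hpq) as [l [A [B [C _]]]]. eauto. Qed.

Lemma sub_line {P : Type} (L : (P -> Prop) -> Prop) (S l : P -> Prop) p q :
  subspace L S -> L l -> p <> q -> S p -> S q -> l p -> l q -> subset l S.
Proof. intros HS Hl Hpq Hp Hq Hlp Hlq. exact (HS l p q Hl Hpq Hp Hq Hlp Hlq). Qed.

Lemma inter_subspace {P : Type} (L : (P -> Prop) -> Prop) (A B : P -> Prop) :
  subspace L A -> subspace L B -> subspace L (fun v => A v /\ B v).
Proof.
  intros HA HB l p q Hl Hpq [Ap Bp] [Aq Bq] Hlp Hlq x Hx. split.
  exact (HA l p q Hl Hpq Ap Aq Hlp Hlq x Hx). exact (HB l p q Hl Hpq Bp Bq Hlp Hlq x Hx).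
Qed.

Lemma plane_dim {P : Type} (L : (P -> Prop) -> Prop) (a b c : P) :
  linear_space L -> a <> b -> a <> c -> b <> c -> ~ collinear L a b c ->
  dimension L (closure L (lset [a; b; c])) 2.
Proof.
  intros LS Hab Hac Hbc Hcol. split.
  - exists [a; b; c]. split. repeat constructor; simpl; intuition.
    split. reflexivity. intro; tauto.
  - intros s Hs.
    assert (Ha : closure L (fun x => In x s) a) by (apply Hs, cl_sub; simpl; auto).
    assert (Hb : closure L (fun x => In x s) b) by (apply Hs, cl_sub; simpl; auto).
    assert (Hc : closure L (fun x => In x s) c) by (apply Hs, cl_sub; simpl; auto).
    destruct s as [|x [|y [|w s]]]; simpl; try lia.
    + assert (K : subset (closure L (fun v => In v [])) (fun v : P => In v [])).
      { apply cl_min. intros l p q _ _ []. intros v Hv; exact Hv. }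
      apply K in Ha. destruct Ha.
    + assert (K : subset (closure L (fun v => In v [x])) (fun v => v = x)).
      { apply cl_min. intros l p q _ Hpq Hp Hq. congruence. intros v [<-|[]]; reflexivity. }
      apply K in Ha. apply K in Hb. congruence.
    + destruct (classic (x = y)) as [<-|Hxy].
      * assert (K : subset (closure L (fun v => In v [x; x])) (fun v => v = x)).
        { apply cl_min. intros l p q _ Hpq Hp Hq. congruence. intros v [<-|[<-|[]]]; reflexivity. }
        apply K in Ha. apply K in Hb. congruence.
      * destruct (line_exists L x y LS Hxy) as [l [Hl [Hlx Hly]]].
        assert (K : subset (closure L (fun v => In v [x; y])) l).
        { apply cl_min.
          - intros l2 p q Hl2 Hpq Hp Hq Hl2p Hl2q.
            rewrite (line_eq L l2 l p q LS Hl2 Hl Hpq Hl2p Hl2q Hp Hq). intros v Hv; exact Hv.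
          - intros v [<-|[<-|[]]]; assumption. }
        exfalso. apply Hcol. exists l. auto.
Qed.

Lemma plane_meet {P : Type} (L : (P -> Prop) -> Prop) (H g : P -> Prop) (a h1 h2 : P) :
  projective_space L -> subspace L H -> ~ H a -> H h1 -> H h2 -> h1 <> h2 -> L g ->
  subset g (closure L (lset [a; h1; h2])) -> exists z, g z /\ H z.
Proof.
  intros [LS PP] HH Ha H1 H2 H12 Hg Hsub.
  assert (Ha1 : a <> h1) by congruence. assert (Ha2 : a <> h2) by congruence.
  assert (Hcol : ~ collinear L a h1 h2).
  { intros [m [Hm [ma [m1 m2]]]]. apply Ha. exact (HH m h1 h2 Hm H12 H1 H2 m1 m2 a ma). }
  destruct (PP _ (cl_subspace L _) (plane_dim L a h1 h2 LS Ha1 Ha2 H12 Hcol)) as [Meet _].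
  destruct (line_exists L h1 h2 LS H12) as [k [Hk [k1 k2]]].
  assert (Hks : subset k (closure L (lset [a; h1; h2]))).
  { apply (sub_line L _ k h1 h2); auto. apply cl_subspace. apply cl_sub; simpl; auto. apply cl_sub; simpl; auto. }
  destruct (Meet g k Hg Hk Hsub Hks) as [z [gz kz]].
  exists z. split; auto. exact (HH k h1 h2 Hk H12 H1 H2 k1 k2 z kz).
Qed.

Definition Jset {P : Type} (L : (P -> Prop) -> Prop) (H : P -> Prop) (a : P) : P -> Prop :=
  fun w => w = a \/ exists h m, H h /\ L m /\ m a /\ m h /\ m w.

Lemma line_in_plane {P : Type} (L : (P -> Prop) -> Prop) (m : P -> Prop) (a h1 h2 : P) (u : P) :
  L m -> a <> u -> m a -> m u -> closure L (lset [a; h1; h2]) u ->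
  subset m (closure L (lset [a; h1; h2])).
Proof.
  intros Hm Hau ma mu Hu. apply (sub_line L _ m a u); auto. apply cl_subspace.
  apply cl_sub; simpl; auto.
Qed.

Lemma join_sub {P : Type} (L : (P -> Prop) -> Prop) (H : P -> Prop) (a : P) :
  projective_space L -> subspace L H -> ~ H a ->
  subset (closure L (fun v => H v \/ v = a)) (Jset L H a).
Proof.
  intros PS HH Ha. pose proof (proj1 PS) as LS. apply cl_min.
  2:{ intros v [Hv| ->]; [|left; reflexivity]. right.
      assert (a <> v) by congruence. destruct (line_exists L a v LS H0) as [m [Hm [ma mv]]].
      exists v, m. auto. }
  intros l p q Hl Hpq Hp Hq Hlp Hlq x Hlx.
  destruct Hp as [-> | [h1 [m1 [Hh1 [Hm1 [Hm1a [Hm1h Hm1p]]]]]]];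
  destruct Hq as [-> | [h2 [m2 [Hh2 [Hm2 [Hm2a [Hm2h Hm2q]]]]]]].
  - contradiction.
  - rewrite (line_eq L l m2 a q LS Hl Hm2 Hpq Hlp Hlq Hm2a Hm2q) in Hlx.
    right. exists h2, m2. auto.
  - rewrite (line_eq L l m1 p a LS Hl Hm1 Hpq Hlp Hlq Hm1p Hm1a) in Hlx.
    right. exists h1, m1. auto.
  - destruct (classic (x = a)) as [->|Hxa]. left; reflexivity.
    destruct (classic (p = a)) as [->|Hpa].
    { rewrite (line_eq L l m2 a q LS Hl Hm2 Hpq Hlp Hlq Hm2a Hm2q) in Hlx.
      right. exists h2, m2. auto. }
    destruct (classic (q = a)) as [->|Hqa].
    { rewrite (line_eq L l m1 p a LS Hl Hm1 Hpq Hlp Hlq Hm1p Hm1a) in Hlx.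
      right. exists h1, m1. auto. }
    assert (Ha1 : a <> h1) by congruence. assert (Ha2 : a <> h2) by congruence.
    destruct (classic (h1 = h2)) as [<-|H12].
    { assert (m1 = m2) as <- by exact (line_eq L m1 m2 a h1 LS Hm1 Hm2 Ha1 Hm1a Hm1h Hm2a Hm2h).
      rewrite (line_eq L l m1 p q LS Hl Hm1 Hpq Hlp Hlq Hm1p Hm2q) in Hlx.
      right. exists h1, m1. auto. }
    set (E := closure L (lset [a; h1; h2])).
    assert (m1E : subset m1 E) by (apply (line_in_plane L m1 a h1 h2 h1); auto; apply cl_sub; simpl; auto).
    assert (m2E : subset m2 E) by (apply (line_in_plane L m2 a h1 h2 h2); auto; apply cl_sub; simpl; auto).
    assert (lE : subset l E) by (apply (sub_line L E l p q); auto; apply cl_subspace).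
    destruct (line_exists L a x LS (not_eq_sym Hxa)) as [g [Hg [ga gx]]].
    assert (gE : subset g E).
    { apply (line_in_plane L g a h1 h2 x); auto. apply lE, Hlx. }
    destruct (plane_meet L H g a h1 h2 PS HH Ha Hh1 Hh2 H12 Hg gE) as [z [gz Hz]].
    right. exists z, g. auto.
Qed.

Lemma exchange_of_projective {P : Type} (L : (P -> Prop) -> Prop) :
  projective_space L -> exchange_axiom L.
Proof.
  intros PS X p1 p2 H1 H2 H12. pose proof (proj1 PS) as LS.
  assert (HJ : Jset L (closure L X) p1 p2).
  { apply (join_sub L (closure L X) p1 PS (cl_subspace L X) H1).
    revert H12. apply cl_mono2. intros v [Hv| ->]. apply cl_sub. left. apply cl_sub, Hv.
    apply cl_sub. right; reflexivity. }
  destruct HJ as [-> | [h [m [Hh [Hm [mp1 [mh mp2]]]]]]].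
  - apply cl_sub. right; reflexivity.
  - assert (p2 <> h) by (intro; subst; contradiction).
    apply (sub_line L _ m p2 h); auto. apply cl_subspace.
    apply cl_sub; right; reflexivity.
    revert Hh. apply cl_mono. intros v Hv; left; exact Hv.
Qed.

Lemma line_meets_hyper {P : Type} (L : (P -> Prop) -> Prop) (H l : P -> Prop) (a b c : P) :
  projective_space L -> subspace L H -> ~ H a -> L l -> l b -> l c -> b <> c ->
  closure L (fun v => H v \/ v = a) b -> closure L (fun v => H v \/ v = a) c ->
  exists z, l z /\ H z.
Proof.
  intros PS HH Ha Hl lb lc Hbc Hb Hc. pose proof (proj1 PS) as LS.
  apply (join_sub L H a PS HH Ha) in Hb. apply (join_sub L H a PS HH Ha) in Hc.
  destruct Hb as [-> | [h1 [m1 [Hh1 [Hm1 [Hm1a [Hm1h Hm1p]]]]]]];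
  destruct Hc as [-> | [h2 [m2 [Hh2 [Hm2 [Hm2a [Hm2h Hm2q]]]]]]].
  - contradiction.
  - rewrite (line_eq L l m2 a c LS Hl Hm2 Hbc lb lc Hm2a Hm2q). eauto.
  - rewrite (line_eq L l m1 b a LS Hl Hm1 Hbc lb lc Hm1p Hm1a). eauto.
  - assert (Ha1 : a <> h1) by congruence. assert (Ha2 : a <> h2) by congruence.
    destruct (classic (h1 = h2)) as [<-|H12].
    { assert (m1 = m2) as <- by exact (line_eq L m1 m2 a h1 LS Hm1 Hm2 Ha1 Hm1a Hm1h Hm2a Hm2h).
      rewrite (line_eq L l m1 b c LS Hl Hm1 Hbc lb lc Hm1p Hm2q). eauto. }
    set (E := closure L (lset [a; h1; h2])).
    assert (m1E : subset m1 E) by (apply (line_in_plane L m1 a h1 h2 h1); auto; apply cl_sub; simpl; auto).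
    assert (m2E : subset m2 E) by (apply (line_in_plane L m2 a h1 h2 h2); auto; apply cl_sub; simpl; auto).
    assert (lE : subset l E) by (apply (sub_line L E l b c); auto; apply cl_subspace).
    exact (plane_meet L H l a h1 h2 PS HH Ha Hh1 Hh2 H12 Hl lE).
Qed.

Lemma hyper_meet {P : Type} (L : (P -> Prop) -> Prop) (W S1 S2 : P -> Prop) k n :
  projective_space L -> dimension L (@whole P) n ->
  subspace L W -> dimension L W (Datatypes.S (Datatypes.S k)) ->
  subspace L S1 -> subspace L S2 -> dimension L S1 (Datatypes.S k) -> dimension L S2 (Datatypes.S k) ->
  subset S1 W -> subset S2 W -> S1 <> S2 ->
  dimension L (fun v => S1 v /\ S2 v) k.
Proof.
  intros PS Hn HW DW HS1 HS2 D1 D2 S1W S2W Hne.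
  pose proof (exchange_of_projective L PS) as EX. pose proof (proj1 PS) as LS.
  assert (Hx : exists x, S1 x /\ ~ S2 x).
  { apply NNPP. intro Hc. apply Hne. apply (dim_eq_sub L EX S1 S2 (Datatypes.S k)); auto.
    intros v Hv. apply NNPP. intro. apply Hc. eauto. }
  destruct Hx as [x [Hx1 Hx2]].
  assert (WC : W = closure L (fun v => S2 v \/ v = x)).
  { symmetry. apply (dim_eq_sub L EX _ _ (Datatypes.S (Datatypes.S k))); auto.
    apply dim_cons; auto. apply cl_min; auto. intros v [Hv| ->]; auto. }
  set (V := fun v => S1 v /\ S2 v).
  assert (HV : subspace L V) by (apply inter_subspace; auto).
  assert (S1V : subset S1 (closure L (fun v => V v \/ v = x))).
  { intros y Hy. destruct (classic (y = x)) as [->|Hyx]. apply cl_sub; right; reflexivity.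
    destruct (line_exists L x y LS (not_eq_sym Hyx)) as [l [Hl [lx ly]]].
    assert (lS1 : subset l S1) by (apply (sub_line L S1 l x y); auto).
    destruct (line_meets_hyper L S2 l x x y PS HS2 Hx2 Hl lx ly (not_eq_sym Hyx))
      as [z [lz Hz]].
    - rewrite <- WC. apply S1W; auto.
    - rewrite <- WC. apply S1W; auto.
    - assert (Hzx : z <> x) by (intro; subst; contradiction).
      apply (sub_line L _ l z x); auto. apply cl_subspace.
      apply cl_sub; left; split; auto. apply cl_sub; right; reflexivity. }
  destruct (basis_exists L EX n V Hn HV) as [t [Hf Ht]].
  assert (Hf' : free L (x :: t)).
  { apply free_cons; auto. rewrite Ht. intros [_ A]; contradiction. }
  assert (HS1t : closure L (lset (x :: t)) = S1).
  { rewrite (cl_cons_basis L V t x Ht). apply seq_eq. intro v. split.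
    - apply cl_min; auto. intros w [[Hw _]| ->]; auto.
    - apply S1V. }
  assert (D1' : dimension L S1 (length t)) by (apply (free_dim L EX S1 _ (x :: t)); auto).
  pose proof (dim_unique L S1 _ _ D1 D1') as Hlen.
  apply (free_dim L EX V k t); auto.
Qed.

Lemma preimage_subspace {P P' : Type} (L : (P -> Prop) -> Prop) (L' : (P' -> Prop) -> Prop)
  (f : P -> P') (T : P' -> Prop) :
  strong_embedding L L' f -> subspace L' T -> subspace L (fun x => T (f x)).
Proof.
  intros [Inj [Col _]] HT l p q Hl Hpq Tp Tq lp lq x lx.
  destruct (Col p q x (ex_intro _ l (conj Hl (conj lp (conj lq lx))))) as [m [Hm [mp [mq mx]]]].
  assert (f p <> f q) by (intro E; apply Hpq, Inj, E).
  exact (HT m (f p) (f q) Hm H Tp Tq mp mq (f x) mx).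
Qed.

Lemma image_cl_sub {P P' : Type} (L : (P -> Prop) -> Prop) (L' : (P' -> Prop) -> Prop)
  (f : P -> P') (X : P -> Prop) (T : P' -> Prop) :
  strong_embedding L L' f -> subspace L' T -> subset (image f X) T -> subset (image f (closure L X)) T.
Proof.
  intros SE HT HX y [x [Hx <-]].
  refine (cl_min L X (fun x => T (f x)) _ _ x Hx).
  apply (preimage_subspace L L'); auto.
  intros v Hv. apply HX. exists v; auto.
Qed.

Lemma dim_pres {P P' : Type} (L : (P -> Prop) -> Prop) (L' : (P' -> Prop) -> Prop)
  (f : P -> P') (S : P -> Prop) d :
  exchange_axiom L' -> strong_embedding L L' f -> dimension L S d ->
  dimension L' (closure L' (image f S)) d.
Proof.
  intros EX' SE HD. pose proof SE as [Inj [_ [_ Ind]]].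
  pose proof HD as [[s [ND [Hl Hs]]] _]. apply seq_eq in Hs.
  assert (Hi := indep_of_dim L S d s HD ND Hl Hs).
  apply Ind in Hi.
  assert (Him : image f (lset s) = lset (map f s)).
  { apply seq_eq. intro y. unfold image, lset. rewrite in_map_iff. firstorder. }
  rewrite Him in Hi.
  apply (free_dim L' EX' _ d (map f s)).
  - split. apply NoDup_map_NoDup_ForallPairs; auto. intros a b _ _ E; apply Inj, E.
    intros y Hy Hc.
    set (Y := fun w => lset (map f s) w /\ w <> y).
    assert (Hsub : subset (lset (map f s)) Y).
    { apply Hi. intros w [Hw _]; exact Hw.
      intro w. split. apply cl_mono. intros v [Hv _]; exact Hv.
      apply cl_mono2. intros v Hv. destruct (classic (v = y)) as [->|Hne]. exact Hc.
      apply cl_sub. split; auto. }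
    destruct (Hsub y Hy) as [_ E]. apply E; reflexivity.
  - rewrite length_map; exact Hl.
  - apply cl_eq_of.
    + intros y Hy. apply cl_sub. rewrite <- Him in Hy. destruct Hy as [x [Hx <-]].
      exists x. split; auto. rewrite <- Hs. apply cl_sub, Hx.
    + intros y Hy. rewrite <- Hs in Hy.
      apply (image_cl_sub L L' f (lset s) (closure L' (lset (map f s))) SE (cl_subspace L' _)); auto.
      rewrite Him. apply cl_sub.
Qed.

Lemma dim_nonempty {P : Type} (L : (P -> Prop) -> Prop) (S : P -> Prop) m :
  dimension L S m -> exists x, S x.
Proof.
  intros [[s [_ [Hl Hs]]] _]. destruct s as [|x s]; [discriminate|].
  exists x. apply (proj1 (Hs x)). apply (cl_sub L (fun y => In y (x :: s))). left; reflexivity.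
Qed.

Lemma cl_nil {P : Type} (L : (P -> Prop) -> Prop) :
  subset (closure L (lset (@nil P))) (fun _ => False).
Proof. apply cl_min. intros l p q _ _ []. intros v []. Qed.

Definition Gsurj {P P' : Type} (L : (P -> Prop) -> Prop)
  (L' : (P' -> Prop) -> Prop) (f : P -> P') (k : nat) : Prop :=
  forall T, subspace L' T -> dimension L' T k ->
     exists S, subspace L S /\ dimension L S k /\
       set_eq (closure L' (image f S)) T.

Lemma not_whole {P : Type} (L : (P -> Prop) -> Prop) (V : P -> Prop) k n :
  dimension L (@whole P) n -> dimension L V k -> k < n -> exists a, ~ V a.
Proof.
  intros Hn HV Hk. apply NNPP. intro Hc.
  assert (V = @whole P).
  { apply seq_eq. intro x. split. intros _; exact I. intros _. apply NNPP. intro. apply Hc; eauto. }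
  subst V. pose proof (dim_unique L _ _ _ Hn HV). lia.
Qed.

Lemma step {P P' : Type} (L : (P -> Prop) -> Prop) (L' : (P' -> Prop) -> Prop) (f : P -> P') n k :
  projective_space L -> dimension L (@whole P) n ->
  exchange_axiom L' -> dimension L' (@whole P') n -> strong_embedding L L' f ->
  Datatypes.S k < n -> Gsurj L L' f (Datatypes.S k) -> Gsurj L L' f k.
Proof.
  intros PS Hn EX' Hn' SE Hk G V' HV' DV'.
  pose proof (exchange_of_projective L PS) as EX.
  destruct (not_whole L' V' k n Hn' DV' ltac:(lia)) as [a' Ha'].
  set (T1 := closure L' (fun v => V' v \/ v = a')).
  assert (D1 : dimension L' T1 (Datatypes.S k)) by (apply dim_cons; auto).
  destruct (not_whole L' T1 (Datatypes.S k) n Hn' D1 Hk) as [b' Hb'].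
  assert (Hb'V : ~ V' b') by (intro; apply Hb'; apply cl_sub; left; auto).
  set (T2 := closure L' (fun v => V' v \/ v = b')).
  assert (D2 : dimension L' T2 (Datatypes.S k)) by (apply dim_cons; auto).
  destruct (G T1 (cl_subspace L' _) D1) as [S1 [HS1 [DS1 E1]]]. apply seq_eq in E1.
  destruct (G T2 (cl_subspace L' _) D2) as [S2 [HS2 [DS2 E2]]]. apply seq_eq in E2.
  assert (Hne : S1 <> S2).
  { intro E. apply Hb'. rewrite <- E1, E, E2. apply cl_sub. right; reflexivity. }
  set (W := closure L (fun v => S1 v \/ S2 v)).
  set (W' := closure L' (fun v => T1 v \/ v = b')).
  assert (DW' : dimension L' W' (Datatypes.S (Datatypes.S k))) by (apply dim_cons; auto).
  assert (imW : subset (image f W) W').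
  { apply (image_cl_sub L L' f _ W' SE (cl_subspace L' _)).
    intros y [x [[Hx|Hx] <-]].
    - apply cl_sub. left. rewrite <- E1. apply cl_sub. exists x; auto.
    - assert (T2 (f x)) by (rewrite <- E2; apply cl_sub; exists x; auto).
      revert H. apply cl_mono2. intros v [Hv| ->].
      + apply cl_sub. left. apply cl_sub. left; exact Hv.
      + apply cl_sub. right; reflexivity. }
  destruct (basis_exists L EX n W Hn (cl_subspace L _)) as [t [Hf Ht]].
  destruct (dim_nonempty L S1 _ DS1) as [x1 Hx1].
  destruct t as [|t0 t'].
  { exfalso. apply (cl_nil L x1). rewrite Ht. apply cl_sub. left; exact Hx1. }
  assert (DW : dimension L W (length t')) by (apply (free_dim L EX W _ (t0 :: t')); auto).
  assert (Hle1 : length t' <= Datatypes.S (Datatypes.S k)).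
  { apply (dim_le L' EX' (closure L' (image f W)) W'); auto.
    apply (dim_pres L L'); auto. apply cl_min; auto. apply cl_subspace. }
  assert (Hx2 : exists x, S2 x /\ ~ S1 x).
  { apply NNPP. intro Hc. apply Hne. symmetry. apply (dim_eq_sub L EX S2 S1 (Datatypes.S k)); auto.
    intros v Hv. apply NNPP. intro. apply Hc. eauto. }
  destruct Hx2 as [x2 [Hx2 Hx2']].
  assert (Hle2 : Datatypes.S (Datatypes.S k) <= length t').
  { apply (dim_le L EX (closure L (fun v => S1 v \/ v = x2)) W); auto.
    apply dim_cons; auto. apply cl_mono. intros v [Hv| ->]; auto. }
  assert (DW2 : dimension L W (Datatypes.S (Datatypes.S k))) by (replace (Datatypes.S (Datatypes.S k)) with (length t') by lia; exact DW).
  assert (DV : dimension L (fun v => S1 v /\ S2 v) k).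
  { apply (hyper_meet L W S1 S2 k n); auto. apply cl_subspace.
    intros v Hv; apply cl_sub; left; exact Hv. intros v Hv; apply cl_sub; right; exact Hv. }
  exists (fun v => S1 v /\ S2 v). split; [apply inter_subspace; auto|]. split; [exact DV|].
  assert (Eq : closure L' (image f (fun v => S1 v /\ S2 v)) = V').
  { apply (dim_eq_sub L' EX' _ V' k); auto. apply (dim_pres L L'); auto.
    apply cl_min; auto. intros y [x [[Hx1' Hx2''] <-]].
    assert (A1 : T1 (f x)) by (rewrite <- E1; apply cl_sub; exists x; auto).
    assert (A2 : T2 (f x)) by (rewrite <- E2; apply cl_sub; exists x; auto).
    apply NNPP. intro Hz.
    assert (HclV : closure L' V' = V') by (apply cl_of_subspace; auto).
    assert (Hc : closure L' (fun v => V' v \/ v = f x) b').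
    { apply EX'. rewrite HclV; exact Hb'V. rewrite HclV; exact Hz. exact A2. }
    apply Hb'. revert Hc. apply cl_min. apply cl_subspace.
    intros v [Hv| ->]. apply cl_sub; left; exact Hv. exact A1. }
  rewrite Eq. intro; tauto.
Qed.

Lemma surj_of {P P' : Type} (L : (P -> Prop) -> Prop) (L' : (P' -> Prop) -> Prop) (f : P -> P') n :
  projective_space L -> dimension L (@whole P) n ->
  exchange_axiom L' -> dimension L' (@whole P') n -> strong_embedding L L' f ->
  forall k, k < n -> Gsurj L L' f k -> forall y, exists x, f x = y.
Proof.
  intros PS Hn EX' Hn' SE k. induction k as [|k IH]; intros Hk G.
  - intro y. set (T := fun v : P' => v = y).
    assert (HT : subspace L' T) by (intros l p q _ Hpq Hp Hq; unfold T in *; congruence).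
    assert (HclT : closure L' (lset [y]) = T).
    { apply seq_eq. intro v. split. apply cl_min; auto. intros w [<-|[]]; reflexivity.
      intros ->. apply cl_sub. left; reflexivity. }
    assert (DT : dimension L' T 0).
    { apply (free_dim L' EX' T 0 [y]); auto. split. repeat constructor; simpl; tauto.
      intros x [<-|[]] Hc.
      assert (K : subset (closure L' (fun v => In v [y] /\ v <> y)) (fun _ => False)).
      { apply cl_min. intros l p q _ _ []. intros v [[<-|[]] Hv]; apply Hv; reflexivity. }
      exact (K y Hc). }
    destruct (G T HT DT) as [S [HS [DS ES]]].
    destruct (dim_nonempty L S 0 DS) as [x Hx]. exists x.
    apply (proj1 (ES (f x))). apply (cl_sub L' (image f S)). exists x; auto.
  - intros y. apply IH. lia. apply (step L L' f n k); auto.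
Qed.

Lemma line_image {P P' : Type} (L : (P -> Prop) -> Prop) (L' : (P' -> Prop) -> Prop) (f : P -> P')
  (l : P -> Prop) (l' : P' -> Prop) p q :
  linear_space L -> linear_space L' -> strong_embedding L L' f -> (forall y, exists x, f x = y) ->
  L l -> L' l' -> p <> q -> l p -> l q -> l' (f p) -> l' (f q) -> set_eq (image f l) l'.
Proof.
  intros LS LS' [Inj [Col [NCol _]]] Surj Hl Hl' Hpq lp lq l'p l'q.
  assert (Hfpq : f p <> f q) by (intro E; apply Hpq, Inj, E).
  intro y. split.
  - intros [x [lx <-]].
    destruct (Col p q x (ex_intro _ l (conj Hl (conj lp (conj lq lx))))) as [m [Hm [mp [mq mx]]]].
    rewrite <- (line_eq L' m l' (f p) (f q) LS' Hm Hl' Hfpq mp mq l'p l'q). exact mx.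
  - intros Hy. destruct (Surj y) as [x <-].
    assert (C : collinear L p q x).
    { apply NNPP. intro Hc. apply (NCol p q x Hc). exists l'. auto. }
    destruct C as [m [Hm [mp [mq mx]]]].
    exists x. split; auto.
    rewrite <- (line_eq L m l p q LS Hm Hl Hpq mp mq lp lq). exact mx.
Qed.

Theorem proposition2p4 (P P' : Type) (L : (P -> Prop) -> Prop)
  (L' : (P' -> Prop) -> Prop) (n : nat) (f : P -> P') :
  projective_space L -> dimension L (@whole P) n ->
  linear_space L' -> dimension L' (@whole P') n -> exchange_axiom L' ->
  strong_embedding L L' f ->
  (exists k, k < n /\ Gk_bijective L L' f k) ->
  collineation L L' f.
Proof.
  intros PS Hn LS' Hn' EX' SE [k [Hk [_ Gs]]].
  pose proof (proj1 PS) as LS.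
  assert (Surj : forall y, exists x, f x = y) by exact (surj_of L L' f n PS Hn EX' Hn' SE k Hk Gs).
  pose proof SE as [Inj _].
  split; [exact Inj|]. split; [exact Surj|]. split.
  - intros l Hl. destruct (proj1 (proj2 LS) l Hl) as [p [q [Hpq [lp lq]]]].
    assert (Hfpq : f p <> f q) by (intro E; apply Hpq, Inj, E).
    destruct (line_exists L' (f p) (f q) LS' Hfpq) as [l' [Hl' [l'p l'q]]].
    exists l'. split; auto. apply (line_image L L' f l l' p q); auto.
  - intros l' Hl'. destruct (proj1 (proj2 LS') l' Hl') as [y1 [y2 [Hy [l1 l2]]]].
    destruct (Surj y1) as [p <-]. destruct (Surj y2) as [q <-].
    assert (Hpq : p <> q) by (intro; subst; contradiction).
    destruct (line_exists L p q LS Hpq) as [l [Hl [lp lq]]].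
    exists l. split; auto. apply (line_image L L' f l l' p q); auto.
Qed.
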